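(* Every ideal triangulation $T$ of $(S,V)$ admits a branching.
   Context: $S$ is a compact closed connected surface and $V\subset S$ is a finite set of $n$ marked points with $\chi(S)-n<0$. An ideal triangulation of $(S,V)$ is a possibly loose triangulation of $S$ (self- and multiple adjacencies allowed) with vertex set exactly $V$, i.e. obtained by gluing abstract triangles along abstract edges in pairs. A branching of $T$ is a choice of orientation of each edge such that, on every abstract triangle, the induced orientations of its three edges are induced by a total order of its vertices, each edge pointing towards the larger endpoint. Equivalently, it is a $\Delta$-complex structure on $T$. *)

(* Defs.v *)
From HB Require Import structures.
From mathcomp Require Import all_boot all_order all_algebra.
Set Implicit Arguments. Unset Strict Implicit. Unset Printing Implicit Defensive.

(* Each triangle [t] has three
   corners [(t, c)], c : 'I_3, and three sides [(t, k)], k : 'I_3; side k of t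
   is the segment joining corner k to corner [ordS k] (= k+1 mod 3).
   A gluing is given by
   - [g : T * 'I_3 -> T * 'I_3], pairing the sides (fixed-point-free involution);
   - [f : T * 'I_3 -> bool], telling how the sides are identified:
       f s = false : corner k |-> corner k',  corner k+1 |-> corner k'+1,
       f s = true  : corner k |-> corner k'+1, corner k+1 |-> corner k',
     where g s = (t', k').  Both kinds are allowed (S need not be orientable). *)

Section Triang.
Variable T : finType.
Variables (g : T * 'I_3 -> T * 'I_3) (f : T * 'I_3 -> bool).

Definition gluing_ok : Prop :=
  [/\ involutive g, (forall s, g s != s) & (forall s, f (g s) = f s)].

Definition glued_corner0 (s : T * 'I_3) : T * 'I_3 :=
  let: (t', k') := g s in if f s then (t', ordS k') else (t', k').
Definition glued_corner1 (s : T * 'I_3) : T * 'I_3 :=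
  let: (t', k') := g s in if f s then (t', k') else (t', ordS k').

Definition corner_adj : rel (T * 'I_3) := fun x y =>
  [exists s : T * 'I_3,
     ((s == x) && (glued_corner0 s == y)) ||
     (((s.1, ordS s.2) == x) && (glued_corner1 s == y))].

Definition corner_equiv : rel (T * 'I_3) :=
  connect (fun x y => corner_adj x y || corner_adj y x).

Definition vertices : {set {set T * 'I_3}} :=
  equivalence_partition corner_equiv setT.
Definition nvertices : nat := #|vertices|.
(* edges = pairs of glued sides *)
Definition nedges : nat := #|{: T * 'I_3}| %/ 2.
Definition nfaces : nat := #|T|.

Definition euler_char : int := (nvertices%:Z - nedges%:Z + nfaces%:Z)%R.

(* the glued surface is connected: the dual graph is connected *)
Definition tri_adj : rel T := fun a b =>
  [exists k : 'I_3, exists k' : 'I_3, g (a, k) == (b, k')].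
Definition connected_triang : Prop := forall a b : T, connect tri_adj a b.

(* A branching: an orientation of each edge.  [o s = true] means that side
   s = (t,k) is oriented from corner k to corner k+1.  Orientations of glued
   sides must agree as orientations of the same edge, and on each triangle the
   orientations must be induced by a total order of its three corners, each
   edge pointing towards the larger endpoint. *)
Definition branching (o : T * 'I_3 -> bool) : Prop :=
  (forall s, o (g s) = o s (+) f s) /\
  (forall t : T, exists r : 'I_3 -> nat,
      injective r /\ forall k : 'I_3, o (t, k) = (r k < r (ordS k))%N).

End Triang.

(* Main.v *)
Require Import Defs.
From HB Require Import structures.
From mathcomp Require Import all_boot all_order all_algebra.
Set Implicit Arguments. Unset Strict Implicit. Unset Printing Implicit Defensive.

Definition i0 : 'I_3 := @Ordinal 3 0 isT.
Definition i1 : 'I_3 := @Ordinal 3 1 isT.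
Definition i2 : 'I_3 := @Ordinal 3 2 isT.
Lemma ord3P (k : 'I_3) : k = i0 \/ k = i1 \/ k = i2.
Proof.
case: k => [[|[|[|m]]] Hk]; [left|right;left|right;right|by []]; exact: val_inj.
Qed.
Lemma ordS_i0 : ordS i0 = i1. Proof. exact: val_inj. Qed.
Lemma ordS_i1 : ordS i1 = i2. Proof. exact: val_inj. Qed.
Lemma ordS_i2 : ordS i2 = i0. Proof. exact: val_inj. Qed.
Lemma ordS_neq (k : 'I_3) : ordS k != k.
Proof. by case: (ord3P k) => [->|[->|->]]; rewrite ?ordS_i0 ?ordS_i1 ?ordS_i2. Qed.

Lemma key3 (a b c : bool) : ~~ [&& a == b & b == c] ->
  exists x y z : nat, [/\ uniq [:: x; y; z], a = (x < y)%N, b = (y < z)%N & c = (z < x)%N].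
Proof.
case: a; case: b; case: c => //= _.
- by exists 0%N, 1%N, 2%N.
- by exists 1%N, 2%N, 0%N.
- by exists 0%N, 2%N, 1%N.
- by exists 2%N, 0%N, 1%N.
- by exists 1%N, 0%N, 2%N.
- by exists 2%N, 1%N, 0%N.
Qed.

Lemma exit_edge (T : finType) (e : rel T) (X : {set T}) u v :
  connect e u v -> u \in X -> v \notin X -> exists x y, [/\ x \in X, y \notin X & e x y].
Proof.
case/connectP => p; elim: p u => [|y p IH] u /=.
  by move=> _ -> ->.
move=> /andP[euy py] ev uX nX.
case yX: (y \in X); first exact: (IH y py ev yX nX).
by exists u, y; rewrite yX.
Qed.

Lemma pick_other (T : finType) (x : T) (k : 'I_3) (e : T * 'I_3) :
  exists j, j != k /\ (x, j) != e.
Proof.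
case: (eqVneq (x, ordS k) e) => [<-|ne]; last by exists (ordS k); rewrite ordS_neq.
exists (ordS (ordS k)); split.
  by case: (ord3P k) => [->|[->|->]]; rewrite ?ordS_i0 ?ordS_i1 ?ordS_i2.
by rewrite xpair_eqE eqxx /= ordS_neq.
Qed.

Section Proof.
Variable T : finType.
Variables (g : T * 'I_3 -> T * 'I_3) (f : T * 'I_3 -> bool).
Hypothesis gK : involutive g.
Hypothesis gnfix : forall s, g s != s.
Hypothesis fg : forall s, f (g s) = f s.
Hypothesis conn : connected_triang g.

Definition cons (o : T * 'I_3 -> bool) := forall x, o (g x) = o x (+) f x.
Definition nae (o : T * 'I_3 -> bool) (t : T) := exists i j : 'I_3, o (t,i) != o (t,j).

Definition upd (e : T * 'I_3) (o : T * 'I_3 -> bool) (b : bool) x :=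
  if x == e then b else if x == g e then b (+) f e else o x.

Lemma upd_eq e o b z : z != e -> z != g e -> upd e o b z = o z.
Proof. by rewrite /upd => /negbTE -> /negbTE ->. Qed.
Lemma upd_at e o b : upd e o b e = b.
Proof. by rewrite /upd eqxx. Qed.

Lemma upd_cons e o b : cons o -> cons (upd e o b).
Proof.
move=> co x; rewrite /upd.
have gxE : (g x == e) = (x == g e).
  by apply/eqP/eqP => [<-|->]; rewrite gK.
have gxE' : (g x == g e) = (x == e).
  by apply/eqP/eqP => [/(can_inj gK)|->].
rewrite gxE gxE'.
case: (eqVneq x e) => [->|ne].
  by rewrite eq_sym (negbTE (gnfix e)).
case: (eqVneq x (g e)) => [->|ne2]; last exact: co.
by rewrite fg -addbA addbb addbF.
Qed.

Lemma nae_r o t : nae o t ->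
  exists r : 'I_3 -> nat, injective r /\ forall k : 'I_3, o (t, k) = (r k < r (ordS k))%N.
Proof.
move=> [i [j nij]].
have nall : ~~ [&& o (t,i0) == o (t,i1) & o (t,i1) == o (t,i2)].
  apply/negP => /andP[/eqP ab /eqP bc]; move: nij.
  by case: (ord3P i) => [->|[->|->]]; case: (ord3P j) => [->|[->|->]];
    rewrite ?ab ?bc eqxx.
have [x [y [z [u ea eb ec]]]] := key3 nall.
exists (fun k : 'I_3 => nth 0%N [:: x; y; z] k); split.
  move=> k1 k2 /eqP; rewrite nth_uniq // => /eqP; exact: val_inj.
by move=> k; case: (ord3P k) => [->|[->|->]]; rewrite ?ordS_i0 ?ordS_i1 ?ordS_i2.
Qed.

Section WithS.
Variable s : T * 'I_3.

Definition adj' : rel T := fun a b =>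
  [exists k : 'I_3, [exists k' : 'I_3,
     (g (a,k) == (b,k')) && ((a,k) != s) && ((a,k) != g s)]].

Lemma adj'_sym : symmetric adj'.
Proof.
have H : forall a b, adj' a b -> adj' b a.
  move=> a b /existsP[k /existsP[k' /andP[/andP[/eqP e n1] n2]]].
  apply/existsP; exists k'; apply/existsP; exists k.
  rewrite -e gK eqxx /=; apply/andP; split.
    by apply: contra n2 => /eqP <-; rewrite gK.
  by apply: contra n1 => /eqP /(can_inj gK) ->.
by move=> a b; apply/idP/idP; apply: H.
Qed.

Lemma claim n : forall X : {set T}, #|X| = n -> s.1 \notin X ->
  (forall u, u \in X -> exists2 v, v \notin X & connect adj' u v) ->
  exists o, cons o /\ forall b t, t \in X -> nae (upd s o b) t.
Proof.
elim: n => [|n IH] X HX sX Hc.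
  exists (fun x => (enum_rank (g x) < enum_rank x)%N && f x); split.
    move=> x; rewrite gK fg; case: (f x); rewrite ?andbF ?andbT ?addbT //.
    rewrite -leqNgt ltn_neqAle (_ : (enum_rank x != enum_rank (g x)) = true) //.
    by have := gnfix x; apply: contraNneq => /enum_rank_inj <-.
  by move=> b t; move/cards0_eq: HX => XE; rewrite XE inE.
have : (0 < #|X|)%N by rewrite HX.
case/card_gt0P => u uX.
have [v vX cuv] := Hc u uX.
have [x [y [xX yX]]] := exit_edge cuv uX vX.
case/existsP => k /existsP [k' /andP[/andP[/eqP gxk nes] nes']].
have HX' : #|X :\ x| = n by move: HX; rewrite (cardsD1 x) xX add1n => -[].
have sX' : s.1 \notin X :\ x by rewrite in_setD1 (negbTE sX) andbF.
have Hc' : forall u, u \in X :\ x -> exists2 v, v \notin X :\ x & connect adj' u v.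
  move=> w; rewrite in_setD1 => /andP[_ wX]; have [v' v'X c'] := Hc w wX.
  by exists v' => //; rewrite in_setD1 (negbTE v'X) andbF.
have [o' [co' rob']] := IH _ HX' sX' Hc'.
have [j [jk xjg]] := pick_other x k (g s).
have xy : x != y by apply: contraNneq yX => <-.
have xjs : (x, j) != s by apply: contraNneq sX => <-.
exists (upd (x,k) o' (~~ o' (x,j))); split; first exact: upd_cons.
move=> b t tX.
case: (eqVneq t x) => [->|tx].
  exists k, j.
  rewrite (upd_eq _ _ nes nes') upd_at (upd_eq _ _ xjs xjg) upd_eq.
  - by case: (o' (x,j)).
  - by rewrite xpair_eqE eqxx /=.
  by rewrite gxk xpair_eqE negb_and xy.
have tX' : t \in X :\ x by rewrite in_setD1 tx.
have [i1 [i2 ne]] := rob' b t tX'.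
exists i1, i2.
have E : forall i, upd s (upd (x,k) o' (~~ o' (x,j))) b (t,i) = upd s o' b (t,i).
  move=> i; rewrite /upd; case: ifP => // _; case: ifP => // _.
  rewrite ifN ?ifN //; last by rewrite xpair_eqE negb_and tx.
  rewrite gxk xpair_eqE negb_and; apply/orP; left.
  by apply: contraNneq yX => <-.
by rewrite !E.
Qed.

Lemma pathB q a : path (tri_adj g) a q -> s.1 \notin a :: q -> (g s).1 \in a :: q ->
  connect adj' a (g s).1.
Proof.
elim: q a => [|b q IH] a /=.
  by move=> _ _; rewrite inE => /eqP <-; exact: connect0.
move=> /andP[ab pq]; rewrite inE negb_or => /andP[nsa nin].
rewrite inE => /orP[/eqP <-|win]; first exact: connect0.
case: (eqVneq a (g s).1) => [<-|naw]; first exact: connect0.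
apply: connect_trans (IH b pq nin win); apply: connect1.
case/existsP: ab => k1 /existsP[k2 e]; apply/existsP; exists k1; apply/existsP; exists k2.
rewrite e /=; apply/andP; split.
  by apply: contra nsa => /eqP <-.
by apply: contra naw => /eqP <-.
Qed.

Lemma lift : connect adj' s.1 (g s).1 ->
  forall u v, connect (tri_adj g) u v -> connect adj' u v.
Proof.
move=> Hw; apply: connect_sub => a b /existsP[k /existsP[k' /eqP gak]].
case: (eqVneq (a,k) s) => [as_|n1].
  have -> : a = s.1 by rewrite -as_.
  by have -> : b = (g s).1 by rewrite -as_ gak.
case: (eqVneq (a,k) (g s)) => [ags|n2].
  have bs : (b,k') = s by rewrite -gak ags gK.
  rewrite (sym_connect_sym adj'_sym).
  have -> : a = (g s).1 by rewrite -ags.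
  by have -> : b = s.1 by rewrite -bs.
apply: connect1; apply/existsP; exists k; apply/existsP; exists k'.
by rewrite gak eqxx n1 n2.
Qed.

End WithS.

Lemma exists_nb (x0 : T) : exists s, connect (adj' s) s.1 (g s).1.
Proof.
pose P n := [exists v0 : T, [exists p : n.-tuple T,
              uniq (v0 :: p) && path (tri_adj g) v0 p]].
have P0 : exists n, P n.
  by exists 0%N; apply/existsP; exists x0; apply/existsP; exists [tuple].
have ub : forall n, P n -> (n <= #|T|)%N.
  move=> n /existsP[v0 /existsP[p /andP[u _]]].
  have := max_card (mem (v0 :: p)); rewrite (card_uniqP u) /= size_tuple.
  by move/ltnW.
case: (ex_maxnP P0 ub) => m /existsP[v0 /existsP[p /andP[u pa]]] maxm.
have inP : forall s, s.1 = v0 -> (g s).1 \in v0 :: p.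
  move=> s sv; apply/negPn/negP => nin.
  have : P m.+1.
    apply/existsP; exists (g s).1; apply/existsP; exists [tuple of v0 :: p].
    rewrite (_ : tval [tuple of v0 :: p] = v0 :: tval p) //= nin pa andbT (u : (v0 \notin p) && uniq p) /=.
    apply/existsP; exists (g s).2; apply/existsP; exists s.2.
    by rewrite -surjective_pairing gK -sv -surjective_pairing.
  by move/maxm; rewrite ltnn.
move: u pa inP; case: (tval p) => [|v1 rest] u pa inP.
  exists (v0, ord0); have := inP (v0, ord0) erefl; rewrite inE => /eqP ->.
  exact: connect0.
case/andP: pa => /existsP[k0 /existsP[k' /eqP gk]] pa.
exists (v0, ordS k0) => /=.
have := inP (v0, ordS k0) erefl.
rewrite inE => /orP[/eqP ->|win]; first exact: connect0.
case: (eqVneq v0 (g (v0, ordS k0)).1) => [<-|nw]; first exact: connect0.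
apply: connect_trans (pathB pa _ win).
  apply: connect1; apply/existsP; exists k0; apply/existsP; exists k'.
  rewrite gk eqxx /= xpair_eqE eqxx eq_sym (negbTE (ordS_neq k0)) /=.
  by apply: contra nw => /eqP <-.
by move: u; rewrite /= => /andP[].
Qed.

Lemma main_closed : exists o, branching g f o.
Proof.
case: (pickP (fun _ : T => true)) => [x0 _|T0]; last first.
  exists (fun _ => true); split; first by case=> t; have := T0 t.
  by move=> t; have := T0 t.
have [s Hs] := exists_nb x0.
set X := [set: T] :\ s.1.
have sX : s.1 \notin X by rewrite in_setD1 eqxx.
have Hc : forall u, u \in X -> exists2 v, v \notin X & connect (adj' s) u v.
  by move=> u _; exists s.1 => //; apply: lift; [exact: Hs | exact: conn].
have [o [co rob]] := claim (n := #|X|) erefl sX Hc.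
have [j [jk xjg]] := pick_other s.1 s.2 (g s).
have xjs : (s.1, j) != s.
  by rewrite {2}(surjective_pairing s) xpair_eqE eqxx /=.
exists (upd s o (~~ o (s.1, j))); split; first exact: upd_cons.
move=> t; apply: nae_r.
case: (eqVneq t s.1) => [->|ts]; last first.
  have tX : t \in X by rewrite /X in_setD1 ts in_setT.
  exact: rob.
exists s.2, j; rewrite -surjective_pairing upd_at upd_eq //.
by case: (o (s.1, j)).
Qed.

End Proof.

Theorem lemma2p9 (T : finType) (g : T * 'I_3 -> T * 'I_3) (f : T * 'I_3 -> bool) :
  gluing_ok g f ->
  connected_triang g ->
  (euler_char g f - (nvertices g f)%:Z < 0)%R ->
  exists o : T * 'I_3 -> bool, branching g f o.
Proof.
case=> gK gnfix fg conn _.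
by apply: main_closed.
Qed.
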